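(* Let $f(q)=\sum_{n\ge0}a(n)q^n$ with real coefficients satisfy $a(n)>0$ for all $n>n_0$, for some $n_0\in\mathbb{N}_0$. Let $\lambda\in\{0,1\}$, $m\in\mathbb{N}$, and set $\delta_0=1$, $\delta_1=2$. Then for every $n\ge0$ the coefficient of $q^n$ in $q^{-m\lambda^2/4}f(q)\theta_\lambda(m\tau)$ is at least $\delta_\lambda a(n)-2\sum_{0\le j\le n_0}|a(j)|$. Moreover, if for some $n_1\in\mathbb{N}$ one has $\delta_\lambda a(n)>2\sum_{0\le j\le n_0}|a(j)|$ for all $n\ge n_1$, then the coefficient of $q^{\nu}$ in $f(q)\theta_\lambda(m\tau)$ is positive for every exponent $\nu\ge n_1+\frac{m\lambda^2}{4}$.
   Context: $q=e^{2\pi i\tau}$. For $\lambda\in\{0,1\}$, $\theta_\lambda(\tau)=\sum_{n\in\mathbb{Z}}q^{(n+\lambda/2)^2}$, so $\theta_\lambda(m\tau)=\sum_{n\in\mathbb{Z}}q^{m(n+\lambda/2)^2}$; thus $q^{-m\lambda^2/4}\theta_\lambda(m\tau)$ is a power series in integral powers of $q$, and the exponents occurring in $f(q)\theta_\lambda(m\tau)$ lie in $\mathbb{Z}+\frac{m\lambda^2}{4}$. *)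

(* Defs.v *)
From mathcomp Require Import all_boot all_order all_algebra.
Set Implicit Arguments. Unset Strict Implicit. Unset Printing Implicit Defensive.
Import Order.TTheory GRing.Theory Num.Theory.
Local Open Scope ring_scope.

(* q^{-m lam^2/4} theta_lam(m tau) = sum_{k in Z} q^{m (k^2 + lam k)}.
   Its coefficient of q^j (j : nat) is #{k in Z | m (k^2 + lam k) = j}.
   For m >= 1 and lam in {0,1} every such k satisfies -j-1 <= k <= j, so we
   enumerate k over that finite window. *)
Definition theta_coef (lam m j : nat) : nat :=
  count (fun k : int => (m%:Z * (k ^+ 2 + lam%:Z * k) == j%:Z))
        [seq (i%:Z - j.+1%:Z)%R | i <- iota 0 (2 * j).+2].

(* coefficient of q^n in q^{-m lam^2/4} f(q) theta_lam(m tau)  (Cauchy product) *)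
Definition shifted_coef {R : nzRingType} (a : nat -> R) (lam m n : nat) : R :=
  \sum_(j < n.+1) a (n - j)%N * (theta_coef lam m j)%:R.

Definition theta_shift (lam m : nat) : rat := (m * lam ^ 2)%:R / 4%:R.

(* coefficient of q^nu (nu rational) in f(q) theta_lam(m tau): the exponents
   occurring are nu = n + m lam^2/4 with n : nat, with coefficient shifted_coef n;
   all other coefficients are 0. *)
Definition full_coef {R : nzRingType} (a : nat -> R) (lam m : nat) (nu : rat) : R :=
  let z := Num.floor (nu - theta_shift lam m) in
  if (z%:~R == nu - theta_shift lam m) && (0 <= z) then shifted_coef a lam m `|z|%N
  else 0.

Definition delta {R : nzRingType} (lam : nat) : R := if lam == 0%N then 1 else 2.

(* Main.v *)
Require Import Defs.
From mathcomp Require Import all_boot all_order all_algebra.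
From mathcomp Require Import ring lra zify.
Import Order.TTheory GRing.Theory Num.Theory.
Local Open Scope ring_scope.

Lemma theta_sol (lam m : nat) (k k' : int) (hm : (0 < m)%N) :
  (m%:Z * (k ^+ 2 + lam%:Z * k) == m%:Z * (k' ^+ 2 + lam%:Z * k')) ->
  (k' == k) || (k' == - k - lam%:Z).
Proof.
move=> /eqP h.
have hm0 : m%:Z != 0 by rewrite eqz_nat -lt0n.
have h2 : (k' - k) * (k' + k + lam%:Z) = 0.
  have := mulfI hm0 h => e.
  transitivity (k' ^+ 2 + lam%:Z * k' - (k ^+ 2 + lam%:Z * k)); first by ring.
  by rewrite e subrr.
move/eqP: h2; rewrite mulf_eq0 => /orP [h3|h3].
  by rewrite subr_eq0 in h3; rewrite h3.
apply/orP; right; apply/eqP.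
move/eqP: h3 => h3. have : k' = k' + k + lam%:Z - k - lam%:Z by ring.
by rewrite h3 => ->; ring.
Qed.

Lemma theta_coef_le2 (lam m j : nat) (hm : (0 < m)%N) : (theta_coef lam m j <= 2)%N.
Proof.
rewrite /theta_coef.
set P := (fun k : int => _).
set s := map _ _.
have us : uniq s.
  rewrite map_inj_uniq ?iota_uniq //.
  by move=> x y /addIr /eqP; rewrite eqz_nat => /eqP.
case: (boolP (has P s)) => [/hasP [k0 _ Pk0] | hn]; last first.
  by move: hn; rewrite has_count -leqNgt => /leq_trans; apply.
apply: (leq_trans (sub_count (a2 := predU (pred1 k0) (pred1 (- k0 - lam%:Z))) _ s)).
  move=> k Pk; rewrite /= -/(pred1 k0 k) -/(pred1 _ k) /=.
  apply: ((@theta_sol lam m k0 k hm)).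
  by rewrite /P in Pk0 Pk; rewrite (eqP Pk0) (eqP Pk).
have := count_predUI (pred1 k0) (pred1 (- k0 - lam%:Z)) s.
rewrite !count_uniq_mem //.
case: (_ \in _); case: (_ \in _) => /=; lia.
Qed.

Lemma theta_coef0 (lam m : nat) (hlam : (lam <= 1)%N) (hm : (0 < m)%N) :
  theta_coef lam m 0 = (if lam == 0%N then 1 else 2)%N.
Proof.
rewrite /theta_coef /=.
case: lam hlam => [|[|]] // _ /=.
  rewrite !(sub0r, subrr, mul0r, addr0, mulr0, sqrrN, expr1n, expr0n, mul1r, mulr1) /=.
  by rewrite eqz_nat eqn0Ngt hm.
by rewrite !(sub0r, subrr, mul0r, addr0, mulr0, sqrrN, expr1n, expr0n, mul1r, mulr1, subrr) /=.
Qed.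

Lemma sum_g (R : realFieldType) (a : nat -> R) (n0 n : nat) :
  \sum_(i < n) (if (i <= n0)%N then `|a i| else 0) <= \sum_(j < n0.+1) `|a j|.
Proof.
set g := fun i : nat => if (i <= n0)%N then `|a i| else 0.
have g0 : forall i, 0 <= g i by move=> i; rewrite /g; case: ifP.
have -> : \sum_(j < n0.+1) `|a j| = \sum_(j < n0.+1) g j.
  by apply: eq_bigr => i _; rewrite /g -ltnS ltn_ord.
rewrite -!(big_mkord xpredT g).
apply: (@le_trans _ _ (\sum_(0 <= i < n0.+1 + n) g i)).
  rewrite [X in _ <= X](big_cat_nat _ (n := n)) //=; last by lia.
  by rewrite lerDl sumr_ge0.
rewrite [X in X <= _](big_cat_nat _ (n := n0.+1)) //=; last by lia.
rewrite [X in _ + X]big1_seq ?addr0 //.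
move=> i /andP [_]; rewrite mem_iota => /andP [hi _].
by rewrite /g leqNgt hi.
Qed.

Lemma part1 (R : realFieldType) (a : nat -> R) (n0 : nat)
    (ha : forall n : nat, (n0 < n)%N -> 0 < a n)
    (lam m : nat) (hlam : (lam <= 1)%N) (hm : (0 < m)%N) (n : nat) :
     delta lam * a n - 2 * \sum_(j < n0.+1) `|a j| <= shifted_coef a lam m n.
Proof.
rewrite /shifted_coef [X in _ <= X]big_ord_recl /= subn0 theta_coef0 //.
have -> : a n * (if lam == 0%N then 1%N else 2%N)%:R = delta lam * a n.
  by rewrite /delta mulrC; case: (lam == 0%N).
rewrite lerD2l.
set g := fun i : nat => if (i <= n0)%N then `|a i| else 0.
apply: (@le_trans _ _ (\sum_(i < n) - (2 * g (n - i.+1)%N))).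
  rewrite sumrN lerN2 -mulr_sumr ler_pM2l ?ltr0n //.
  rewrite (reindex_inj rev_ord_inj) /=.
  have := @sum_g _ a n0 n; apply: le_trans; rewrite le_eqVlt; apply/orP; left; apply/eqP; apply: eq_bigr => i _.
  have hi := ltn_ord i.
  by rewrite /g (_ : (n - (n - i.+1).+1 = i)%N) //; lia.
apply: ler_sum => i _.
rewrite /bump /= add1n.
have c2 := @theta_coef_le2 lam m i.+1 hm.
rewrite /g; case: ifP => hle.
  have hc : ((theta_coef lam m i.+1)%:R : R) <= 2 by rewrite (ler_nat R _ 2).
  have hc0 : (0 : R) <= (theta_coef lam m i.+1)%:R by [].
  have habs := ler_norm (- a (n - i.+1)%N).
  rewrite normrN in habs.
  have p1 : 0 <= (`|a (n - i.+1)%N| + a (n - i.+1)%N) * (theta_coef lam m i.+1)%:R.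
    by apply: mulr_ge0 => //; lra.
  have p2 : 0 <= `|a (n - i.+1)%N| * (2 - (theta_coef lam m i.+1)%:R).
    by apply: mulr_ge0 => //; lra.
  nra.
by rewrite mulr0 oppr0 mulr_ge0 // ltW // ha // ltnNge hle.
Qed.

Theorem lemma6p1 (R : realFieldType) (a : nat -> R) (n0 : nat)
    (ha : forall n : nat, (n0 < n)%N -> 0 < a n)
    (lam m : nat) (hlam : (lam <= 1)%N) (hm : (0 < m)%N) :
  (forall n : nat,
     delta lam * a n - 2 * \sum_(j < n0.+1) `|a j| <= shifted_coef a lam m n)
  /\
  (forall n1 : nat, (0 < n1)%N ->
     (forall n : nat, (n1 <= n)%N -> 2 * \sum_(j < n0.+1) `|a j| < delta lam * a n) ->
     forall nu : rat, (nu - theta_shift lam m) \is a Num.int ->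
       n1%:R + theta_shift lam m <= nu -> 0 < full_coef a lam m nu).
Proof.
split; first exact: part1.
move=> n1 hn1 hbig nu hint hle.
rewrite /full_coef.
set x := nu - theta_shift lam m.
have hx : (Num.floor x)%:~R = x by rewrite floorK.
have hge : (n1%:R : rat) <= x by rewrite /x lerBrDr.
have hz : (0 <= Num.floor x) && (n1%:Z <= Num.floor x).
  by rewrite -(ler_int rat) hx -(ler_int rat) hx (le_trans _ hge) ?ler0n.
case/andP: hz => hz0 hz1.
rewrite hx eqxx hz0 /=.
have hn : (n1 <= `|Num.floor x|)%N.
  by rewrite -lez_nat gez0_abs.
have := @part1 _ a n0 ha lam m hlam hm `|Num.floor x|%N.
have := hbig _ hn.
lra.
Qed.
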